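(* Let $\mathbf X\in\mathbb R^{n\times p}$ be a fixed matrix with $p<n$, let $\mathbf P$ be the orthogonal projection onto its column space, and let $\mathbf X_{\mathrm{all}}\in\mathbb R^{n\times p_{\mathrm{all}}}$ be a fixed matrix. Suppose $\mathbf y=\mathbf X\boldsymbol\beta+\sigma\boldsymbol\varepsilon$ with $\boldsymbol\beta\in\mathbb R^p$, $\sigma>0$ and $\boldsymbol\varepsilon\sim\mathcal N_n(\mathbf 0,\mathbf I)$ (the null hypothesis). Let $\hat{\mathbf R}^{(0)}=(\mathbf I-\mathbf P)\mathbf y/\|(\mathbf I-\mathbf P)\mathbf y\|_2$, and for $b=1,\dots,B$ let $\hat{\mathbf R}^{(b)}=(\mathbf I-\mathbf P)\boldsymbol\zeta^{(b)}/\|(\mathbf I-\mathbf P)\boldsymbol\zeta^{(b)}\|_2$, where $\boldsymbol\zeta^{(1)},\dots,\boldsymbol\zeta^{(B)}$ are i.i.d. $\mathcal N_n(\mathbf 0,\mathbf I)$, independent of $\boldsymbol\varepsilon$. Let $f_1,\dots,f_L:\mathbb R^n\times\mathbb R^{n\times p_{\mathrm{all}}}\to\mathbb R$ be measurable functions, set $f^{(b)}_l=f_l(\hat{\mathbf R}^{(b)},\mathbf X_{\mathrm{all}})$, $\mathbf f^{(b)}=(f^{(b)}_l)_{l=1}^L$, and let $\mathbf f^{(-b)}$ denote the collection $\{\mathbf f^{(b')}:b'\in\{0,\dots,B\},b'\neq b\}$ arranged as an $L\times B$ matrix. Let $\tilde Q:\mathbb R^L\times\mathbb R^{L\times B}\to\mathbb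 R$ be measurable and invariant under permutations of the columns of its second argument, and set $\tilde Q_b=\tilde Q(\mathbf f^{(b)},\mathbf f^{(-b)})$ for $b=0,\dots,B$. Define $$Q=\frac{1}{B+1}\Big(1+\sum_{b=1}^B\mathbb 1_{\{\tilde Q_b\ge\tilde Q_0\}}\Big).$$ Then $\mathbb P(Q\le x)\le x$ for all $x\in[0,1]$.
   Context: The functions $f_l$ are called residual prediction functions; $\tilde Q_b$ measures how extreme the $b$-th curve is relative to the others (larger = more extreme). *)

(* Defs.v *)
From HB Require Import structures.
From mathcomp Require Import all_boot all_order all_algebra all_fingroup.
From mathcomp Require Import all_classical all_reals all_analysis.
Set Implicit Arguments. Unset Strict Implicit. Unset Printing Implicit Defensive.
Import Order.TTheory GRing.Theory Num.Theory.
Local Open Scope classical_set_scope.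
Local Open Scope ring_scope.

Section defs.
Context {R : realType}.

Definition norm2 n (v : 'cV[R]_n) : R := Num.sqrt (\sum_(i < n) v i 0 ^+ 2).

(* P is the orthogonal projection onto the column space of X:
   symmetric, idempotent, with column space equal to that of X
   (row space of P^T = P equals row space of X^T). *)
Definition is_orth_proj_onto n p (X : 'M[R]_(n, p)) (P : 'M[R]_n) : Prop :=
  P^T = P /\ P *m P = P /\ (P == X^T)%MS.

Definition normres n (P : 'M[R]_n) (v : 'cV[R]_n) : 'cV[R]_n :=
  let r := (1%:M - P) *m v in (norm2 r)^-1 *: r.

(* coordinates, to use the measurable structure of tuples *)
Definition tuple_of_cV n (v : 'cV[R]_n) : n.-tuple R := [tuple v i 0 | i < n].
Definition tuple_of_mx n m (M : 'M[R]_(n, m)) : n.-tuple (m.-tuple R) :=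
  [tuple [tuple M i j | j < m] | i < n].
Definition tuple_of_fun L (g : 'I_L -> R) : L.-tuple R := [tuple g l | l < L].

(* the i.i.d. standard Gaussian family: each coordinate is measurable and the
   joint law is the product of N(0,1) laws (mutual independence + marginals) *)
Definition iid_std_gaussian d (T : measurableType d) (P : probability T R)
  (I : finType) (Z : I -> T -> R) : Prop :=
  (forall i, measurable_fun setT (Z i)) /\
  forall A : I -> set R, (forall i, measurable (A i)) ->
    P (\bigcap_(i in [set: I]) (Z i @^-1` A i)) =
    (\prod_(i : I) fine (normal_prob 0 1 (A i)))%:E.

(* source noise vectors: index 0 is epsilon, index lift ord0 b is zeta^(b) *)
Definition noise T n B (eps : T -> 'cV[R]_n) (zeta : 'I_B -> T -> 'cV[R]_n)
  (b : 'I_B.+1) : T -> 'cV[R]_n :=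
  if unlift ord0 b is Some b' then zeta b' else eps.

Definition col_perm_invariant L B (Qt : L.-tuple R * B.-tuple (L.-tuple R) -> R)
  : Prop :=
  forall (u : L.-tuple R) (M : B.-tuple (L.-tuple R)) (s : 'S_B),
    Qt (u, [tuple tnth M (s j) | j < B]) = Qt (u, M).

End defs.

(* Main.v *)
Require Import Defs.
From HB Require Import structures.
From mathcomp Require Import all_boot all_order all_algebra all_fingroup.
From mathcomp Require Import all_classical all_reals all_analysis.
From mathcomp Require Import measurable_realfun.
Import Order.TTheory GRing.Theory Num.Theory.
Local Open Scope classical_set_scope.
Local Open Scope ring_scope.

Section exch.
Context (R : realType) d (T : measurableType d) (Prob : probability T R)
  (I : finType) (Z : I -> T -> R).
Hypothesis hZ : iid_std_gaussian Prob Z.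

Definition Ntup (h : I -> I) (w : T) : #|I|.-tuple R :=
  [tuple Z (h (enum_val k)) w | k < #|I|].

Arguments Ntup : simpl never.

Lemma tnth_Ntup h w k : tnth (Ntup h w) k = Z (h (enum_val k)) w.
Proof. by rewrite /Ntup tnth_map tnth_ord_tuple. Qed.

Lemma Ntup_meas h : measurable_fun setT (Ntup h).
Proof.
apply/measurable_fun_tnthP => k.
rewrite /comp /=.
have -> : (fun x => tnth (Ntup h x) k) = Z (h (enum_val k)).
  by apply: funext => w; rewrite tnth_Ntup.
exact: hZ.1.
Qed.

Definition rects : set (set (#|I|.-tuple R)) :=
  [set X | exists Af : 'I_#|I| -> set R, (forall k, measurable (Af k)) /\
     X = \bigcap_(k in setT) ((fun t => tnth t k) @^-1` Af k)].

Lemma rects_meas : rects `<=` measurable.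
Proof.
move=> _ [Af [mA ->]]; apply: fin_bigcap_measurable; first exact: finite_finset.
move=> k _; rewrite -[X in measurable X]setTI; exact: measurable_tnth.
Qed.

Lemma rects_setI : setI_closed rects.
Proof.
move=> _ _ [Af [mA ->]] [Bf [mB ->]]; exists (fun k => Af k `&` Bf k); split.
  by move=> k; apply: measurableI.
apply/seteqP; split => t /=.
  by move=> [h1 h2] k _; split; [apply: h1|apply: h2].
by move=> h; split => k _; have [] := h k Logic.I.
Qed.

Lemma meas_rects (A : set (#|I|.-tuple R)) : measurable A -> <<s rects >> A.
Proof.
apply: smallest_sub; first exact: smallest_sigma_algebra.
move=> X; rewrite -bigcup_seq => -[i _ [Y mY <-]].
apply: sub_sigma_algebra; exists (fun k => if k == i then Y else setT); split.
  by move=> k; case: eqP.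
apply/seteqP; split => t /=.
  by move=> [_ hY] k _; case: eqP => // ->.
by move=> h; split => //; have := h i Logic.I; rewrite eqxx.
Qed.

Lemma Ntup_rect (s : {perm I}) Af :
  Ntup s @^-1` (\bigcap_(k in setT) ((fun t => tnth t k) @^-1` Af k)) =
  \bigcap_(i in [set: I]) (Z i @^-1` (Af (enum_rank (s^-1 i)%g))).
Proof.
apply/seteqP; split => w.
  move=> h i _; have := h (enum_rank (s^-1 i)%g) Logic.I.
  move=> H; have E := tnth_Ntup s w (enum_rank (s^-1 i)%g).
  rewrite enum_rankK permKV in E.
  change (Af (enum_rank (s^-1 i)%g) (Z i w)); rewrite -E; exact: H.
move=> h k _; have E := tnth_Ntup s w k.
change (Af k (tnth (Ntup s w) k)); rewrite E.
have := h (s (enum_val k)) Logic.I.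
by rewrite permK enum_valK.
Qed.

Lemma exch (s : {perm I}) (A : set (#|I|.-tuple R)) : measurable A ->
  Prob (Ntup id @^-1` A) = Prob (Ntup s @^-1` A).
Proof.
move=> mA.
pose m1 := measure_function_pushforward__canonical__measure_function_Measure
  Prob (Ntup_meas id).
pose m2 := measure_function_pushforward__canonical__measure_function_Measure
  Prob (Ntup_meas s).
have := @g_sigma_algebra_measure_unique _ _ _ rects rects_meas (fun _ => setT) _ _ m1 m2.
apply.
- move=> _; exists (fun _ => setT); split => //.
  by apply/seteqP; split => t //=.
- by rewrite bigcup_const.
- exact: rects_setI.
- move=> X [Af [mAf ->]].
  rewrite /m1 /m2 /= /pushforward.
  have -> : Ntup id = Ntup (1%g : {perm I}).
    by apply: funext => w; apply: eq_mktuple => k; rewrite perm1.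
  rewrite !Ntup_rect !hZ.2; last 2 first.
  - by move=> i; apply: mAf.
  - by move=> i; apply: mAf.
  congr (_%:E).
  rewrite [RHS](reindex_inj (h := s) (@perm_inj _ s)) /=.
  by apply: eq_bigr => i _; rewrite invg1 perm1 permK.
- move=> k; change (pushforward Prob (Ntup id) setT < +oo)%E.
  by rewrite /pushforward preimage_setT probability_setT ltry.
- exact: meas_rects.
Qed.
End exch.
Section det.
Context (R : realType) (B : nat).

Definition cnt (q : 'I_B.+1 -> R) (b : 'I_B.+1) : R :=
  \sum_(b' < B.+1) (if q b <= q b' then 1 else 0).

Lemma sum_if_card (P : pred 'I_B.+1) :
  \sum_(b < B.+1) (if P b then 1 else 0) = #|P|%:R :> R.
Proof. by rewrite -big_mkcond /= sumr_const. Qed.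

Lemma count_bound (q : 'I_B.+1 -> R) (x : R) : 0 <= x ->
  \sum_(b < B.+1) (if cnt q b / B.+1%:R <= x then 1 else 0) <= B.+1%:R * x.
Proof.
move=> x0; rewrite sum_if_card.
set S := [pred b | cnt q b / B.+1%:R <= x].
have [b0 Sb0|S0] := pickP S; last first.
  by rewrite (eq_card0 S0) mulr_ge0.
case: (arg_minP q Sb0) => b1 Sb1 minb1.
have hB : (0 : R) < B.+1%:R by rewrite ltr0n.
apply: (@le_trans _ _ (cnt q b1)); last first.
  by move: Sb1; rewrite /S /= ler_pdivrMr // mulrC.
rewrite /cnt sum_if_card ler_nat; apply: subset_leq_card.
by apply/fintype.subsetP => b Sb; rewrite unfold_in /=; apply: minb1.
Qed.

End det.

Section permq.
Context (R : realType) (L B : nat) (Qt : L.-tuple R * B.-tuple (L.-tuple R) -> R).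
Hypothesis Qinv : col_perm_invariant Qt.

Definition qF (F : 'I_B.+1 -> L.-tuple R) (b : 'I_B.+1) : R :=
  Qt (F b, [tuple F (lift b j) | j < B]).

Lemma qF_perm (pi : {perm 'I_B.+1}) F b : qF (F \o pi) b = qF F (pi b).
Proof.
pose s j := odflt j (unlift (pi b) (pi (lift b j))).
have hs j : lift (pi b) (s j) = pi (lift b j).
  rewrite /s; case: unliftP => [j' ->|] //= /perm_inj E.
  by move: (neq_lift b j); rewrite E eqxx.
have sinj : injective s.
  move=> j1 j2 E; apply: (@lift_inj _ b); apply: (@perm_inj _ pi).
  by have := congr1 (lift (pi b)) E; rewrite !hs.
rewrite /qF -[RHS](Qinv _ _ (perm sinj)); congr (Qt (_, _)).
by apply: eq_from_tnth => j; rewrite !tnth_mktuple permE hs.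
Qed.

End permq.
Section meas.
Context (R : realType).

Lemma meas_inv : measurable_fun setT (@GRing.inv R).
Proof.
have -> : [set: R] = ~` [set 0] `|` [set 0] by rewrite setvU.
have m1 : measurable [set (0:R)] by exact: measurable_set1.
apply/measurable_funU => //; first exact: measurableC.
split; last exact: measurable_fun_set1.
apply: measurable_realfun.open_continuous_measurable_fun.
  exact/closed_openC/accessible_closed_set1/hausdorff_accessible/Rhausdorff.
move=> x; rewrite inE /= => x0; apply: inv_continuous; exact/eqP.
Qed.

Context d (U : measurableType d).

Lemma meas_normres n (P : 'M[R]_n) (g : U -> 'cV[R]_n) :
  (forall i, measurable_fun setT (fun t => g t i 0)) ->
  forall i, measurable_fun setT (fun t => normres P (g t) i 0).
Proof.
move=> hg.
have hr : forall i, measurable_fun setT (fun t => ((1%:M - P) *m g t) i 0).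
  move=> i; under eq_fun do rewrite mxE.
  apply: measurable_sum => j; apply: measurable_realfun.measurable_funM => //; exact: hg.
move=> i; rewrite /normres; under eq_fun do rewrite mxE.
apply: measurable_realfun.measurable_funM => //.
apply: (measurableT_comp meas_inv).
rewrite /norm2; apply: (measurableT_comp (measurable_realfun.continuous_measurable_fun (@sqrt_continuous R))).
apply: measurable_sum => j; apply: measurable_realfun.measurable_funX; exact: hr.
Qed.

End meas.
Arguments Ntup {R d T I} Z h w.
Arguments tnth_Ntup {R d T I} Z h w k.
Arguments Ntup_meas {R d T Prob I Z} hZ h.
Lemma normres_red (R : realType) n p (X : 'M[R]_(n, p)) (P : 'M[R]_n)
  (beta : 'cV[R]_p) (sigma : R) (e : 'cV[R]_n) :
  is_orth_proj_onto X P -> 0 < sigma ->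
  normres P (X *m beta + sigma *: e) = normres P e.
Proof.
move=> [hT [hPP /andP[_ /submxP [D hD]]]] hs.
have hX : X = P *m D^T by rewrite -[X]trmxK hD trmx_mul hT.
have h0 : (1%:M - P) *m X = 0.
  by rewrite hX mulmxA mulmxBl mul1mx hPP subrr mul0mx.
rewrite /normres mulmxDr mulmxA h0 mul0mx add0r -scalemxAr.
set r := (1%:M - P) *m e.
have hn : norm2 (sigma *: r) = sigma * norm2 r.
  rewrite /norm2.
  have -> : \sum_(i < n) (sigma *: r) i 0 ^+ 2 = sigma ^+ 2 * \sum_(i < n) r i 0 ^+ 2.
    by rewrite mulr_sumr; apply: eq_bigr => i _; rewrite mxE exprMn.
  rewrite sqrtrM ?sqr_ge0 // sqrtr_sqr ger0_norm //; exact: ltW.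
rewrite hn scalerA invfM mulrAC mulVf ?mul1r //; exact: lt0r_neq0.
Qed.

Theorem proposition1 (R : realType) (d : measure_display) (T : measurableType d)
  (Prob : probability T R)
  (n p pall L B : nat) (X : 'M[R]_(n, p)) (P : 'M[R]_n) (Xall : 'M[R]_(n, pall))
  (beta : 'cV[R]_p) (sigma : R)
  (eps : T -> 'cV[R]_n) (zeta : 'I_B -> T -> 'cV[R]_n)
  (f : 'I_L -> n.-tuple R * n.-tuple (pall.-tuple R) -> R)
  (Qt : L.-tuple R * B.-tuple (L.-tuple R) -> R) :
  (p < n)%N ->
  is_orth_proj_onto X P ->
  0 < sigma ->
  iid_std_gaussian Prob
    (fun bi : 'I_B.+1 * 'I_n => fun w => noise eps zeta bi.1 w bi.2 ord0) ->
  (forall l, measurable_fun setT (f l)) ->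
  measurable_fun setT Qt ->
  col_perm_invariant Qt ->
  let y := fun w => X *m beta + sigma *: eps w in
  let Rhat := fun (b : 'I_B.+1) w =>
    if unlift ord0 b is Some b' then normres P (zeta b' w) else normres P (y w) in
  let fb := fun (b : 'I_B.+1) w (l : 'I_L) =>
    f l (tuple_of_cV (Rhat b w), tuple_of_mx Xall) in
  let fminus := fun (b : 'I_B.+1) w =>
    [tuple tuple_of_fun (fb (lift b j) w) | j < B] in
  let Qtb := fun (b : 'I_B.+1) w => Qt (tuple_of_fun (fb b w), fminus b w) in
  let Q := fun w =>
    (1 + \sum_(b < B) (if Qtb ord0 w <= Qtb (lift ord0 b) w then 1 else 0)) / B.+1%:R : R in
  forall x : R, 0 <= x <= 1 -> (Prob [set w | (Q w <= x)%R] <= x%:E)%E.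
Proof.
move=> hpn hP hsig hZ hf hQm hQinv y Rhat fb fminus Qtb Q x /andP[x0 x1].
set Z := (fun bi : 'I_B.+1 * 'I_n => fun w => noise eps zeta bi.1 w bi.2 ord0) in hZ.
pose vec := fun (t : #|{: 'I_B.+1 * 'I_n}|.-tuple R) (b : 'I_B.+1) =>
  \col_(i < n) tnth t (enum_rank ((b, i) : 'I_B.+1 * 'I_n)).
pose Fm := fun t (b : 'I_B.+1) => tuple_of_fun
  (fun l => f l (tuple_of_cV (normres P (vec t b)), tuple_of_mx Xall)).
pose Qf := fun t b => cnt R B (qF R L B Qt (Fm t)) b / B.+1%:R.
pose hp := fun (pi : {perm 'I_B.+1}) (bi : 'I_B.+1 * 'I_n) => (pi bi.1, bi.2).
have hRhat b w : Rhat b w = normres P (noise eps zeta b w).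
  rewrite /Rhat /noise; case: (unlift ord0 b) => [b'|] //.
  exact: (normres_red R n p X P beta sigma (eps w) hP hsig).
have hvec pi w b : vec (Ntup Z (hp pi) w) b = noise eps zeta (pi b) w.
  apply/matrixP => i j; rewrite (ord1 j) mxE tnth_Ntup enum_rankK //.
have hvec0 w b : vec (Ntup Z id w) b = noise eps zeta b w.
  have := hvec 1%g w b; rewrite perm1 => <-.
  by congr (vec _ b); apply: eq_mktuple => k; rewrite /hp perm1 -surjective_pairing.
have hFm0 w b : tuple_of_fun (fb b w) = Fm (Ntup Z id w) b.
  by rewrite /Fm hvec0 /fb hRhat.
have hQtb b w : Qtb b w = qF R L B Qt (Fm (Ntup Z id w)) b.
  rewrite /Qtb /qF /fminus hFm0; congr (Qt (_, _)).
  by apply: eq_mktuple => j; rewrite hFm0.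
have hQ w : Q w = Qf (Ntup Z id w) ord0.
  rewrite /Q /Qf /cnt big_ord_recl lexx; congr ((_ + _) / _).
  by apply: eq_bigr => b _; rewrite !hQtb.
have hperm (pi : {perm 'I_B.+1}) w b :
    Qf (Ntup Z (hp pi) w) b = Qf (Ntup Z id w) (pi b).
  have hF : Fm (Ntup Z (hp pi) w) = Fm (Ntup Z id w) \o pi.
    by apply: funext => b'; rewrite /Fm /= hvec hvec0.
  rewrite /Qf /cnt hF; congr (_ / _).
  rewrite [RHS](reindex_inj (h := pi) (@perm_inj _ pi)) /=.
  by apply: eq_bigr => b' _; rewrite !qF_perm.
have mFm b : measurable_fun setT (fun t => Fm t b).
  apply/measurable_fun_tnthP => l.
  have -> : (tnth (T:=R))^~ l \o (fun t => Fm t b) =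
    (fun t => f l (tuple_of_cV (normres P (vec t b)), tuple_of_mx Xall)).
    by apply: funext => t; rewrite /= /Fm /tuple_of_fun tnth_map tnth_ord_tuple.
  apply: (measurableT_comp (hf l)); apply: measurable_fun_pair => //.
  apply/measurable_fun_tnthP => i.
  have -> : (tnth (T:=R))^~ i \o (fun t => tuple_of_cV (normres P (vec t b))) =
    (fun t => normres P (vec t b) i 0).
    by apply: funext => t; rewrite /= /tuple_of_cV tnth_map tnth_ord_tuple.
  apply: (meas_normres R _ _ n P (fun t => vec t b)) => j.
  under eq_fun do rewrite mxE.
  exact: measurable_tnth.
have mq b : measurable_fun setT (fun t => qF R L B Qt (Fm t) b).
  apply: (measurableT_comp hQm); apply: measurable_fun_pair => //.
  apply/measurable_fun_tnthP => j.
  have -> : (tnth (T:=L.-tuple R))^~ j \o (fun t => [tuple Fm t (lift b j0) | j0 < B]) =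
    (fun t => Fm t (lift b j)).
    by apply: funext => t; rewrite /= tnth_map tnth_ord_tuple.
  exact: mFm.
have mQf b : measurable_fun setT (fun t => Qf t b).
  rewrite /Qf /cnt.
  apply: measurable_realfun.measurable_funM => //.
  apply: measurable_sum => b'.
  apply: measurable_fun_ifT => //.
  exact: measurable_realfun.measurable_fun_ler.
have mA : measurable [set t | Qf t ord0 <= x].
  have -> : [set t | Qf t ord0 <= x] = (fun t => Qf t ord0) @^-1` `]-oo, x].
    by apply/seteqP; split => t /=; rewrite in_itv /=.
  by rewrite -[X in measurable X]setTI; apply: mQf => //; exact: measurable_itv.
have hE b : Prob [set w | Qf (Ntup Z id w) b <= x] = Prob [set w | Q w <= x].
  pose pi := tperm ord0 b.
  have hinj : injective (hp pi).
    by move=> [b1 i1] [b2 i2] [/perm_inj -> ->].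
  have := exch R d T Prob _ Z hZ (perm hinj) _ mA.
  have -> : Ntup Z (perm hinj) = Ntup Z (hp pi).
    by apply: funext => w; apply: eq_mktuple => k; rewrite permE.
  move=> E; symmetry; apply: etrans; last apply: etrans; [|exact: E|].
    by congr (Prob _); apply/seteqP; split => w /=; rewrite hQ.
  by congr (Prob _); apply/seteqP; split => w /=; rewrite hperm tpermL.
pose E := fun b => [set w | Qf (Ntup Z id w) b <= x].
have mE b : measurable (E b).
  have -> : E b = (fun w => Qf (Ntup Z id w) b) @^-1` `]-oo, x].
    by apply/seteqP; split => t /=; rewrite in_itv /=.
  rewrite -[X in measurable X]setTI.
  apply: (measurableT_comp (mQf b) (Ntup_meas hZ id)) => //.
have mI b : measurable_fun setT (EFin \o (\1_(E b) : T -> R)).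
  by apply/measurable_EFinP; exact: measurable_indic.
have key : ((B.+1%:R)%:E * Prob [set w | (Q w <= x)%R] <= (B.+1%:R * x)%:E)%E.
  rewrite mule_natl.
  have -> : (Prob [set w | (Q w <= x)%R] *+ B.+1 = \sum_(b < B.+1) Prob (E b))%E.
    by rewrite (eq_bigr (fun=> Prob [set w | (Q w <= x)%R])) ?sumr_const ?card_ord // => b _; rewrite hE.
  have -> : (\sum_(b < B.+1) Prob (E b) =
      \int[Prob]_(w in setT) (\sum_(b < B.+1) (\1_(E b) w)%:E))%E.
    rewrite ge0_integral_sum //; try (by move=> b w _; rewrite lee_fin indicE ler0n).
    by apply: eq_bigr => b _; rewrite integral_indic // setIT.
  apply: (@le_trans _ _ (\int[Prob]_(w in setT) (cst (B.+1%:R * x)%:E w))%E).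
    apply: ge0_le_integral => //.
    - by move=> w _; apply: sume_ge0 => b _; rewrite lee_fin indicE ler0n.
    - exact: emeasurable_sum.
    move=> w _; rewrite sumEFin lee_fin.
    apply: le_trans (count_bound R B (qF R L B Qt (Fm (Ntup Z id w))) x x0).
    rewrite le_eqVlt; apply/orP; left; apply/eqP; apply: eq_bigr => b _.
    rewrite indicE; case: ifPn => h.
      by rewrite mem_set.
    by rewrite memNset //; apply/negP.
  rewrite (@integral_cst _ _ _ Prob setT measurableT).
  have h1 (m : \bar R) : m = 1%E -> ((B.+1%:R * x)%:E * m <= (B.+1%:R * x)%:E)%E.
    by move=> ->; rewrite mule1.
  by apply: h1; exact: probability_setT.
rewrite EFinM lee_pmul2l // in key; by rewrite lte_fin ltr0n.
Qed.
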